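(* For any complete chain $\mathbf{C}$, the pointed residuated lattice $\mathbf{Res}(\mathbf{C})=\langle \mathrm{Res}(\mathbf{C}),\wedge,\vee,\circ,\backslash,/,\mathrm{id},p\rangle$ is simple, i.e., its only congruences are the identity relation and the total relation.
   Context: Let $\mathbf{C}$ be a complete chain with least element $0$ and greatest element $\infty$. $\mathrm{Res}(\mathbf{C})$ is the set of maps $C\to C$ preserving arbitrary joins, with pointwise $\wedge,\vee$, composition $\circ$, identity map $\mathrm{id}$, residuals $f\backslash g=\bigvee\{h\mid f\circ h\le g\}$ and $g/f=\bigvee\{h\mid h\circ f\le g\}$, and the constant $p\colon x\mapsto\bigvee\{y\in C\mid y<x\}$. *)

(* Defs.v *)
(* a complete chain is an orderType (total order) together
   with a supremum operator on arbitrary subsets (given as predicates). *)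
From mathcomp Require Import all_boot all_order.
Set Implicit Arguments. Unset Strict Implicit. Unset Printing Implicit Defensive.
Import Order.TTheory.
Local Open Scope order_scope.

Section ResDefs.
Context {d : Order.disp_t} {T : orderType d}.

Definition is_ub (A : T -> Prop) (x : T) := forall y, A y -> y <= x.
Definition is_lub (A : T -> Prop) (x : T) :=
  is_ub A x /\ forall z, is_ub A z -> x <= z.

Definition complete_sup (sup : (T -> Prop) -> T) :=
  forall A, is_lub A (sup A).

Variable sup : (T -> Prop) -> T.

Definition img (f : T -> T) (A : T -> Prop) : T -> Prop :=
  fun y => exists2 x, A x & f x = y.

Definition join_preserving (f : T -> T) :=
  forall A, f (sup A) = sup (img f A).

Definition Res (f : T -> T) := join_preserving f.

Definition fmeet (f g : T -> T) : T -> T := fun x => Order.min (f x) (g x).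
Definition fjoin (f g : T -> T) : T -> T := fun x => Order.max (f x) (g x).
Definition fcomp (f g : T -> T) : T -> T := fun x => f (g x).
Definition fid : T -> T := fun x => x.
Definition fle (f g : T -> T) := forall x, f x <= g x.

(* joins in Res(C) are pointwise *)
Definition ldiv (f g : T -> T) : T -> T :=
  fun x => sup (fun y => exists h, [/\ Res h, fle (fcomp f h) g & y = h x]).
Definition rdiv (g f : T -> T) : T -> T :=
  fun x => sup (fun y => exists h, [/\ Res h, fle (fcomp h f) g & y = h x]).

Definition pmap : T -> T := fun x => sup (fun y => y < x).

(* congruence of the algebra <Res(C), meet, join, o, \, /, id, p>
   (nullary operations id and p impose no condition) *)
Definition res_congruence (theta : (T -> T) -> (T -> T) -> Prop) :=
  [/\ (forall f, Res f -> theta f f),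
      (forall f g, Res f -> Res g -> theta f g -> theta g f),
      (forall f g h, Res f -> Res g -> Res h -> theta f g -> theta g h -> theta f h)
    & forall f f' g g', Res f -> Res f' -> Res g -> Res g' ->
        theta f f' -> theta g g' ->
        [/\ theta (fmeet f g) (fmeet f' g'),
            theta (fjoin f g) (fjoin f' g'),
            theta (fcomp f g) (fcomp f' g'),
            theta (ldiv f g) (ldiv f' g')
          & theta (rdiv f g) (rdiv f' g')]].

End ResDefs.

(* Main.v *)
Require Import Defs.
From mathcomp Require Import all_boot all_order.
From Stdlib Require Import Classical FunctionalExtensionality PropExtensionality.
Import Order.TTheory.
Local Open Scope order_scope.

Section Aux.
Set Implicit Arguments.
Context {d : Order.disp_t} {T : orderType d}.
Variable sup : (T -> Prop) -> T.
Hypothesis Hsup : complete_sup sup.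

Definition z0 : T := sup (fun _ => False).
Definition zinf : T := sup (fun _ => True).

Lemma le0 y : z0 <= y.
Proof. by apply: (proj2 (Hsup _)) => x []. Qed.

Lemma leinf y : y <= zinf.
Proof. by apply: (proj1 (Hsup _)). Qed.

Lemma sup_le A z : (forall y, A y -> y <= z) -> sup A <= z.
Proof. move=> H; exact: (proj2 (Hsup A)). Qed.

Lemma le_sup A y : A y -> y <= sup A.
Proof. move=> H; exact: (proj1 (Hsup A)). Qed.

Lemma Res0 f : Res sup f -> f z0 = z0.
Proof.
move=> Hf; rewrite /z0 Hf; apply: le_anti; rewrite le0 andbT.
by apply: sup_le => y [x []].
Qed.

Lemma Res_comp f g : Res sup f -> Res sup g -> Res sup (fcomp f g).
Proof.
move=> Hf Hg A; rewrite /fcomp Hg Hf; congr sup.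
apply: functional_extensionality => y; apply: propositional_extensionality.
split.
- by case=> _ [x Ax <-] <-; exists x.
- by case=> x Ax <-; exists (g x) => //; exists x.
Qed.

Definition step (c e : T) : T -> T := fun x => if x <= c then z0 else e.

Lemma Res_step c e : Res sup (step c e).
Proof.
move=> A; rewrite /step.
case: ifP => H.
- apply: le_anti; rewrite le0 /=; apply: sup_le => y [x Ax <-].
  by rewrite (le_trans (@le_sup A x Ax) H).
- have [x Ax Hx] : exists2 x, A x & ~~ (x <= c).
    apply: NNPP => Hn; move/negbT: H => /negP; apply.
    apply: sup_le => y Ay; apply: NNPP => Hy; apply: Hn; exists y => //.
    by apply/negP.
  apply: le_anti; apply/andP; split.
  + by apply: le_sup; exists x => //; rewrite (negbTE Hx).
  + apply: sup_le => y [w Aw <-]; case: ifP => _ //; exact: le0.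
Qed.

Definition fbot : T -> T := fun _ => z0.
Definition ftop : T -> T := step z0 zinf.

Lemma Res_bot : Res sup fbot.
Proof.
move=> A; rewrite /fbot; apply: le_anti; rewrite le0 /=.
by apply: sup_le => y [x _ <-].
Qed.

End Aux.

Theorem proposition2p2 (d : Order.disp_t) (T : orderType d)
  (sup : (T -> Prop) -> T) (Hsup : complete_sup sup)
  (theta : (T -> T) -> (T -> T) -> Prop) :
  res_congruence sup theta ->
  (forall f g, Res sup f -> Res sup g -> (theta f g <-> f = g)) \/
  (forall f g, Res sup f -> Res sup g -> theta f g).
Proof.
case=> Hrefl Hsym Htrans Hcomp.
have Rtop : Res sup (ftop sup) by apply: Res_step.
have core : forall f g a, Res sup f -> Res sup g -> theta f g -> f a < g a ->
    theta (fbot sup) (ftop sup).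
  move=> f g a Hf Hg Hfg Hlt.
  set l := step sup (z0 sup) a; set k := step sup (f a) (zinf sup).
  have Rl : Res sup l by apply: Res_step.
  have Rk : Res sup k by apply: Res_step.
  have H1 : theta (fcomp f l) (fcomp g l).
    by case: (Hcomp f g l l Hf Hg Rl Rl Hfg (Hrefl l Rl)).
  have H2 : theta (fcomp k (fcomp f l)) (fcomp k (fcomp g l)).
    by case: (Hcomp k k _ _ Rk Rk (Res_comp Hf Rl) (Res_comp Hg Rl)
               (Hrefl k Rk) H1).
  have E1 : fcomp k (fcomp f l) = fbot sup.
    apply: functional_extensionality => x.
    rewrite /fcomp /k /l /step /fbot; case: (x <= z0 sup).
    - by rewrite (Res0 Hsup Hf) le0.
    - by rewrite lexx.
  have E2 : fcomp k (fcomp g l) = ftop sup.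
    apply: functional_extensionality => x.
    rewrite /fcomp /k /l /ftop /step; case: (x <= z0 sup).
    - by rewrite (Res0 Hsup Hg) le0.
    - by rewrite leNgt Hlt.
  by rewrite -E1 -E2.
case: (classic (exists f g, [/\ Res sup f, Res sup g, theta f g & f <> g])).
- case=> f [g [Hf Hg Hfg Hne]].
  have [a Ha] : exists a, f a <> g a.
    apply: NNPP => Hn; apply: Hne; apply: functional_extensionality => a.
    by apply: NNPP => Ha; apply: Hn; exists a.
  have Hbt : theta (fbot sup) (ftop sup).
    case: (ltgtP (f a) (g a)) => [Hl|Hl|Heq]; last by [].
    + exact: (core f g a).
    + exact: (core g f a Hg Hf (Hsym f g Hf Hg Hfg)).
  have Hall : forall h, Res sup h -> theta h (ftop sup).
    move=> h Hh.
    have := Hcomp h h _ _ Hh Hh (Res_bot Hsup) Rtop (Hrefl h Hh) Hbt.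
    case=> _ Hj _ _ _.
    have Ea : fjoin h (fbot sup) = h.
      by apply: functional_extensionality => x; rewrite /fjoin /fbot max_l // le0.
    have Eb : fjoin h (ftop sup) = ftop sup.
      apply: functional_extensionality => x; rewrite /fjoin /ftop /step.
      case: ifP => Hx.
      + have -> : x = z0 sup by apply: le_anti; rewrite Hx le0.
        by rewrite (Res0 Hsup Hh) max_l.
      + by rewrite max_r // leinf.
    by rewrite -{1}Ea -Eb.
  right => f' g' Hf' Hg'.
  exact: (Htrans _ _ _ Hf' Rtop Hg' (Hall f' Hf') (Hsym _ _ Hg' Rtop (Hall g' Hg'))).
- move=> Hn; left => f g Hf Hg; split.
  + move=> Hfg; apply: NNPP => Hne; apply: Hn; by exists f, g.
  + by move=> <-; apply: Hrefl.
Qed.
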